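(* Let $k,l\geq 1$ be integers. Then $K(\mathbb{Z}_{2^l}^{2^k})$ is the trivial subgroup $\{(0,0,\dots,0)\}$ of $\mathbb{Z}_{2^l}^{2^k}$.
   Context: For integers $m\ge 2$, $n\ge 2$, the Ducci function $D:\mathbb{Z}_m^n\to\mathbb{Z}_m^n$ is $D(x_1,\dots,x_n)=(x_1+x_2 \bmod m,\dots,x_{n-1}+x_n\bmod m,x_n+x_1\bmod m)$. The Ducci cycle of $\mathbf{u}\in\mathbb{Z}_m^n$ is the set of $\mathbf{v}$ such that there exist integers $\alpha\ge 0$, $\beta\ge 1$ with $\mathbf{v}=D^{\alpha+\beta}(\mathbf{u})=D^{\alpha}(\mathbf{u})$. $K(\mathbb{Z}_m^n)$ denotes the set of all tuples in $\mathbb{Z}_m^n$ lying in the Ducci cycle of some $\mathbf{u}\in\mathbb{Z}_m^n$. *)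

(* Defs.v *)
From mathcomp Require Import all_boot all_algebra.
Set Implicit Arguments. Unset Strict Implicit. Unset Printing Implicit Defensive.
Import GRing.Theory.
Local Open Scope ring_scope.

Definition tup (m n : nat) := {ffun 'I_n -> 'Z_m}.

(* Ducci map: (x_1,...,x_n) |-> (x_1+x_2, ..., x_{n-1}+x_n, x_n+x_1) mod m.
   Index i (0-based) maps to x_i + x_{(i+1) mod n}; ordS gives the cyclic successor. *)
Definition ducci (m n : nat) (x : tup m n) : tup m n :=
  [ffun i : 'I_n => x i + x (ordS i)].

Definition in_ducci_cycle (m n : nat) (u v : tup m n) : Prop :=
  exists alpha beta : nat, (1 <= beta)%N /\
    v = iter (alpha + beta) (@ducci m n) u /\ v = iter alpha (@ducci m n) u.

Definition inK (m n : nat) (v : tup m n) : Prop :=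
  exists u : tup m n, in_ducci_cycle u v.

(* Main.v *)
Require Import Defs.
From mathcomp Require Import all_boot all_algebra.
From mathcomp Require Import ring.
Import GRing.Theory.
Local Open Scope ring_scope.

Section Gen.
Variables m n : nat.
Local Notation V := (tup m n).
Definition addf (f : V -> V) := forall x y, f (x + y) = f x + f y.

Lemma addf0 f : addf f -> f 0 = 0.
Proof. move=> h; have := h 0 0; rewrite addr0 -{1}[f 0]addr0 => /addrI.
by move=> <-. Qed.

Lemma addfMn f c x : addf f -> f (x *+ c) = f x *+ c.
Proof. move=> h; elim: c => [|c IH]; first by rewrite !mulr0n addf0.
by rewrite !mulrS h IH. Qed.

Lemma addf_iter f j : addf f -> addf (iter j f).
Proof. move=> h; elim: j => [//|j IH] x y /=; by rewrite IH h. Qed.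

Definition Sh (x : V) : V := [ffun i => x (ordS i)].

Lemma addS : addf Sh.
Proof. by move=> x y; apply/ffunP=> i; rewrite !ffunE. Qed.

Lemma addD : addf (@ducci m n).
Proof. by move=> x y; apply/ffunP=> i; rewrite !ffunE; ring. Qed.

Lemma DS x : ducci x = x + Sh x.
Proof. by apply/ffunP=> i; rewrite !ffunE. Qed.

Lemma key j x : exists y, iter (2 ^ j) (@ducci m n) x = x + iter (2 ^ j) Sh x + y *+ 2.
Proof.
elim: j x => [|j IH] x.
  by exists 0; rewrite /= DS mul0rn addr0.
set E := iter (2 ^ j) (@ducci m n); set T := iter (2 ^ j) Sh.
have hE : addf E by apply: addf_iter; apply: addD.
have -> : iter (2 ^ j.+1) (@ducci m n) x = E (E x) by rewrite expnS mul2n -addnn iterD.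
have -> : iter (2 ^ j.+1) Sh x = T (T x) by rewrite expnS mul2n -addnn iterD.
have [y hy] := IH x; have [y' hy'] := IH (T x).
exists (T x + y + y' + E y).
rewrite -/E -/T in hy hy'.
have -> : E (E x) = E (x + T x + y *+ 2) by rewrite -hy.
rewrite !hE hy hy'.
by apply/ffunP=> i; rewrite !ffunE; ring.
Qed.

Lemma iterSh j x : iter j Sh x = [ffun i => x (iter j (@ordS n) i)].
Proof.
elim: j => [|j IH]; first by apply/ffunP=> i; rewrite ffunE.
apply/ffunP=> i; rewrite [iter j.+1 _ _]/= ffunE IH !ffunE.
by rewrite iterSr.
Qed.

Lemma iterordS j (i : 'I_n) : val (iter j (@ordS n) i) = ((i + j) %% n)%N.
Proof.
elim: j => [|j IH] /=; first by rewrite addn0 modn_small.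
by rewrite IH -addn1 modnDml addn1 addnS.
Qed.

End Gen.

Theorem corollary1p3 (k l : nat) (hk : (1 <= k)%N) (hl : (1 <= l)%N) :
  forall v : tup (2 ^ l) (2 ^ k), inK v <-> v = 0.
Proof.
set m := (2 ^ l)%N; set n := (2 ^ k)%N.
have n0 : (0 < n)%N by rewrite expn_gt0.
have hD := @addD m n.
have Sn : forall x : tup m n, iter n (@Sh m n) x = x.
  move=> x; rewrite iterSh; apply/ffunP=> i; rewrite ffunE; congr (x _).
  by apply: val_inj; rewrite iterordS modnDr modn_small.
have Dn : forall x : tup m n, exists z, iter n (@ducci m n) x = z *+ 2.
  move=> x; have [y ->] := key m n k x; rewrite Sn; exists (x + y).
  by apply/ffunP=> i; rewrite !ffunE; ring.
have Dnt : forall t (x : tup m n), exists z, iter (n * t) (@ducci m n) x = z *+ (2 ^ t).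
  elim=> [|t IH] x; first by exists x; rewrite muln0 expn0 mulr1n.
  have [z hz] := IH x; have [w hw] := Dn z.
  exists w; rewrite mulnS iterD hz (addfMn _ _ _ _ _ (addf_iter _ _ _ _ hD)) hw.
  by rewrite -mulrnA expnS.
have nil : forall x : tup m n, iter (n * l) (@ducci m n) x = 0.
  move=> x; have [z ->] := Dnt l x; apply/ffunP=> i.
  rewrite ffunMnE ffunE -mulr_natr pchar_Zp ?mulr0 //.
  by rewrite /m -{1}(expn0 2) ltn_exp2l.
have it0 : forall j, iter j (@ducci m n) 0 = 0.
  by move=> j; apply: addf0; apply: addf_iter.
move=> v; split.
  move=> [u [a [b [hb [h1 h2]]]]].
  have hv : v = iter b (@ducci m n) v by rewrite {2}h2 -iterD addnC -h1.
  have hvt : forall t, v = iter (b * t) (@ducci m n) v.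
    elim=> [|t IH]; first by rewrite muln0.
    by rewrite mulnS iterD -IH.
  have hN : (n * l <= b * (n * l))%N by rewrite leq_pmull.
  by rewrite (hvt (n * l)) -(subnK hN) iterD nil it0.
move->; exists 0, 0%N, 1%N; by rewrite !it0.
Qed.
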